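(* Consider the optimization problem \[ \min_{d,\{t_n\},\{P_n\},\{Q_n\}} \ \sum_{n=1}^N (P_n t_n + Q_n t_n) + \frac{\kappa L^3 (D-d)^3}{T^2} \] subject to \[ d \le \sum_{n=1}^N D_n^T,\qquad 2\sum_{n=1}^N t_n \le T - \frac{Ld}{f_B},\qquad 0\le d\le D,\quad P_n\ge 0,\ Q_n\ge 0,\ t_n\ge 0\ \ \forall n\in\{1,\dots,N\}, \] where \[ D_n^T = \min\left( t_n W \ln\left(1+\frac{P_n h_n}{\sigma^2 W}\right),\ t_n W\ln\left(1+\frac{Q_n g_n}{\sigma^2 W}\right)\right). \] Then the optimal $P_n$ and $Q_n$ satisfy $P_n h_n = Q_n g_n$ for all $n\in\{1,\dots,N\}$.
   Context: This models a mobile edge computing system with one mobile device, $N$ decode-and-forward relays operating in time-division multiple access, and a base station. All parameters are given positive constants: $N$ (number of relays), $h_n$ (channel gain from the device to relay $n$), $g_n$ (channel gain from relay $n$ to the base station), $W$ (bandwidth), $\sigma^2$ (noise power spectral density), $\kappa$, $L$, $D$, $T$, and $f_B$. The variables are $d$ (offloaded data), $t_n$ (time slot of relay $n$), $P_n$ (device transmit power to relay $n$), and $Q_n$ (transmit power of relay $n$). *)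

(* Defs.v *)
From mathcomp Require Import all_boot all_order all_algebra.
From mathcomp Require Import all_classical all_reals all_analysis.
Set Implicit Arguments. Unset Strict Implicit. Unset Printing Implicit Defensive.
Import Order.TTheory GRing.Theory Num.Theory.
Local Open Scope ring_scope.

(* Data delivered through relay n in slot t_n (decode-and-forward: min of hops). *)
Definition DT (R : realType) (W sigma2 h g t P Q : R) : R :=
  Num.min (t * W * ln (1 + P * h / (sigma2 * W)))
          (t * W * ln (1 + Q * g / (sigma2 * W))).

Definition objective (R : realType) (N : nat) (kappa L D T d : R)
  (t P Q : 'I_N -> R) : R :=
  \sum_(n < N) (P n * t n + Q n * t n) + kappa * L ^+ 3 * (D - d) ^+ 3 / T ^+ 2.

Definition feasible (R : realType) (N : nat) (h g : 'I_N -> R)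
  (W sigma2 L D T fB d : R) (t P Q : 'I_N -> R) : Prop :=
  [/\ d <= \sum_(n < N) DT W sigma2 (h n) (g n) (t n) (P n) (Q n),
      2 * \sum_(n < N) t n <= T - L * d / fB,
      0 <= d /\ d <= D
    & forall n : 'I_N, [/\ 0 <= P n, 0 <= Q n & 0 <= t n]].

Definition optimal (R : realType) (N : nat) (h g : 'I_N -> R)
  (W sigma2 kappa L D T fB d : R) (t P Q : 'I_N -> R) : Prop :=
  feasible h g W sigma2 L D T fB d t P Q /\
  forall (d' : R) (t' P' Q' : 'I_N -> R),
    feasible h g W sigma2 L D T fB d' t' P' Q' ->
    objective kappa L D T d t P Q <= objective kappa L D T d' t' P' Q'.

(* Main.v *)
Require Import Defs.
From mathcomp Require Import all_boot all_order all_algebra.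
From mathcomp Require Import all_classical all_reals all_analysis.
Import Order.TTheory GRing.Theory Num.Theory.
Local Open Scope ring_scope.

Lemma DT_red (R : realType) (W s h g t P Q P' : R) :
  0 < W -> 0 < s -> 0 < h -> 0 <= t -> 0 <= Q * g -> Q * g <= P * h ->
  P' * h = Q * g -> DT W s h g t P' Q = DT W s h g t P Q.
Proof.
move=> W0 s0 h0 t0 Qg QP P'h; rewrite /DT P'h minxx min_r //.
have sW : 0 < s * W by rewrite mulr_gt0.
apply: ler_wpM2l; first by rewrite mulr_ge0 // ltW.
have p1 : 0 < 1 + Q * g / (s * W).
  by rewrite ltr_wpDr // divr_ge0 // ltW.
rewrite ler_ln ?posrE //; last by apply: (lt_le_trans p1); rewrite lerD2l ler_wpM2r // invr_ge0 ltW.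
by rewrite lerD2l ler_wpM2r // invr_ge0 ltW.
Qed.

Lemma DT_swap (R : realType) (W s h g t P Q : R) :
  DT W s h g t P Q = DT W s g h t Q P.
Proof. by rewrite /DT minC. Qed.

Lemma sum_lt (R : realType) (N : nat) (n : 'I_N) (a b : 'I_N -> R) :
  (forall i, i != n -> a i = b i) -> a n < b n ->
  \sum_(i < N) a i < \sum_(i < N) b i.
Proof.
move=> E lt; rewrite (bigD1 n) //= [X in _ < X](bigD1 n) //=.
apply: ltr_leD => //; rewrite le_eqVlt; apply/orP; left; apply/eqP.
by apply: eq_bigr => i /E.
Qed.

Theorem lemma1 (R : realType) (N : nat) (h g : 'I_N -> R)
  (W sigma2 kappa L D T fB : R) :
  (0 < N)%N -> (forall n, 0 < h n) -> (forall n, 0 < g n) ->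
  0 < W -> 0 < sigma2 -> 0 < kappa -> 0 < L -> 0 < D -> 0 < T -> 0 < fB ->
  forall (d : R) (t P Q : 'I_N -> R),
    optimal h g W sigma2 kappa L D T fB d t P Q ->
    forall n : 'I_N, 0 < t n -> P n * h n = Q n * g n.
Proof.
move=> _ hp gp W0 s0 _ _ _ _ _ d t P Q [[Hd Ht Hd0 Hn] Opt] n tn.
have [Pn Qn tn0] := Hn n.
have [lt|gt|//] := ltgtP (P n * h n) (Q n * g n).
-
  pose Q' := fun i => if i == n then P n * h n / g n else Q i.
  have EQ' : forall i, DT W sigma2 (h i) (g i) (t i) (P i) (Q' i) =
                       DT W sigma2 (h i) (g i) (t i) (P i) (Q i).
    move=> i; rewrite /Q'; case: eqP => [->|//].
    rewrite !(DT_swap _ W sigma2 (h n)); apply: DT_red => //.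
    + by rewrite mulr_ge0 // ltW.
    + exact: ltW.
    + by rewrite divfK // gt_eqF.
  have F : feasible h g W sigma2 L D T fB d t P Q'.
    split => //; first by under eq_bigr do rewrite EQ'.
    move=> i; have [a b c] := Hn i; split => //; rewrite /Q'; case: eqP => // _.
    apply: divr_ge0; [apply: mulr_ge0|]; by [|exact: ltW].
  exfalso; have := Opt _ _ _ _ F; rewrite /objective lerD2r leNgt => /negP; apply.
  apply: (@sum_lt _ _ n) => [i /negbTE ne|]; first by rewrite /Q' ne.
  rewrite /Q' eqxx ltrD2l ltr_pM2r // ltr_pdivrMr; [exact: lt | exact: gp].
- pose P' := fun i => if i == n then Q n * g n / h n else P i.
  have EP' : forall i, DT W sigma2 (h i) (g i) (t i) (P' i) (Q i) =
                       DT W sigma2 (h i) (g i) (t i) (P i) (Q i).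
    move=> i; rewrite /P'; case: eqP => [->|//].
    apply: DT_red => //.
    + by rewrite mulr_ge0 // ltW.
    + exact: ltW.
    + by rewrite divfK // gt_eqF.
  have F : feasible h g W sigma2 L D T fB d t P' Q.
    split => //; first by under eq_bigr do rewrite EP'.
    move=> i; have [a b c] := Hn i; split => //; rewrite /P'; case: eqP => // _.
    apply: divr_ge0; [apply: mulr_ge0|]; by [|exact: ltW].
  exfalso; have := Opt _ _ _ _ F; rewrite /objective lerD2r leNgt => /negP; apply.
  apply: (@sum_lt _ _ n) => [i /negbTE ne|]; first by rewrite /P' ne.
  rewrite /P' eqxx ltrD2r ltr_pM2r // ltr_pdivrMr; [exact: gt | exact: hp].
Qed.
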